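(* Let $\mathbb F$ be a field of characteristic different from $2$ and $3$, let $f,g,v,w\in\mathbb F$, put $A=X^3+fX+g$, $R=-v(X-w)$ and $D=A^2+4R=(X^3+fX+g)^2-4v(X-w)$. Let $Z=\tfrac12(Y+A)$ on the curve $Y^2=D(X)$, so that $Z^2-AZ-R=0$, and let $\overline Z=\tfrac12(-Y+A)$ be its conjugate. Suppose $Z_0=\bigl(Z+d_0(X+e_0)\bigr)/\bigl(u_0(X^2-v_0X+w_0)\bigr)$, where $u_0(X^2-v_0X+w_0)$ divides $d_0^2(X+e_0)^2+d_0(X+e_0)A-R$, has a two-sided continued fraction expansion all of whose partial quotients have degree $1$, with complete quotients $$Z_h=\frac{Z+d_h(X+e_h)}{u_h(X^2-v_hX+w_h)}\qquad(h\in\mathbb Z),$$ in the sense of the Standing Setup below (with $u_h\neq0$ for all $h$). Let $(T_h)_{h\in\mathbb Z}$ be a sequence of nonzero elements of $\mathbb F$ satisfying $T_{h-1}T_{h+1}=d_hT_h^2$ for all $h$. Then for all $h\in\mathbb Z$, $$T_{h-3}T_{h+3}=v^2\,T_{h-2}T_{h+2}-v^3\,(g+wf+w^3)\,T_h^2 .$$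
   Context: Standing Setup. $\mathbb F$ is a field of characteristic not $2$ or $3$; $f,g\in\mathbb F$; $A=X^3+fX+g\in\mathbb F[X]$; $R\in\mathbb F[X]$ is a polynomial of degree at most $2$; $D=A^2+4R$; $Y$ satisfies $Y^2=D(X)$, $Z=\tfrac12(Y+A)$ and $\overline Z=\tfrac12(-Y+A)$, so $Z+\overline Z=A$ and $Z\overline Z=-R$. We are given sequences $(u_h),(v_h),(w_h),(d_h),(e_h)$ of elements of $\mathbb F$ indexed by $h\in\mathbb Z$, with all $u_h\neq0$, such that $Z_h=\bigl(Z+d_h(X+e_h)\bigr)/\bigl(u_h(X^2-v_hX+w_h)\bigr)$ are the consecutive complete quotients of a continued fraction expansion whose $h$-th line is $$\frac{Z+d_h(X+e_h)}{u_h(X^2-v_hX+w_h)}=\frac{X+v_h}{u_h}-\frac{\overline Z+d_{h+1}(X+e_{h+1})}{u_h(X^2-v_hX+w_h)} .$$ Equivalently, for every $h\in\mathbb Z$ the following two identities hold in $\mathbb F[X]$: (i) $A+d_h(X+e_h)+d_{h+1}(X+e_{h+1})=(X+v_h)(X^2-v_hX+w_h)$; (ii) $-u_hu_{h+1}(X^2-v_hX+w_h)(X^2-v_{h+1}X+w_{h+1})=\bigl(Z+d_{h+1}(X+e_{h+1})\bigr)\bigl(\overline Z+d_{h+1}(X+e_{h+1})\bigr)=d_{h+1}^2(X+e_{h+1})^2+d_{h+1}(X+e_{h+1})A-R$. In this statement $R=-v(X-w)$ with $v,w\in\mathbb F$. *)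

(* Defs.v *)
From HB Require Import structures.
From mathcomp Require Import all_boot all_order all_algebra.
Set Implicit Arguments. Unset Strict Implicit. Unset Printing Implicit Defensive.
Import GRing.Theory.
Local Open Scope ring_scope.

Definition Apoly (F : fieldType) (f g : F) : {poly F} :=
  'X^3 + f *: 'X + g%:P.

Definition Rpoly (F : fieldType) (v w : F) : {poly F} :=
  - (v *: ('X - w%:P)).

Definition quadp (F : fieldType) (a b : F) : {poly F} :=
  'X^2 - a *: 'X + b%:P.

Definition cf_line_i (F : fieldType) (f g : F)
  (vs ws ds es : int -> F) (h : int) : Prop :=
  Apoly f g + ds h *: ('X + (es h)%:P) + ds (h + 1) *: ('X + (es (h + 1))%:P)
  = ('X + (vs h)%:P) * quadp (vs h) (ws h).

Definition cf_line_ii (F : fieldType) (f g v w : F)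
  (us vs ws ds es : int -> F) (h : int) : Prop :=
  - ((us h * us (h + 1)) *: (quadp (vs h) (ws h) * quadp (vs (h + 1)) (ws (h + 1))))
  = (ds (h + 1)) ^+ 2 *: ('X + (es (h + 1))%:P) ^+ 2
    + ds (h + 1) *: (('X + (es (h + 1))%:P) * Apoly f g) - Rpoly v w.

(* Main.v *)
Require Import Defs.
From HB Require Import structures.
From mathcomp Require Import all_boot all_order all_algebra.
From mathcomp Require Import ring.
Import GRing.Theory.
Local Open Scope ring_scope.
Definition P5 (F : fieldType) (c0 c1 c2 c3 c4 : F) : {poly F} :=
  c0%:P + c1%:P * 'X + c2%:P * 'X^2 + c3%:P * 'X^3 + c4%:P * 'X^4.

Arguments P5 {F}.
Lemma P5_coef (F : fieldType) (c0 c1 c2 c3 c4 : F) i :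
  (P5 c0 c1 c2 c3 c4)`_i = if i == 0%N then c0 else if i == 1%N then c1 else
    if i == 2%N then c2 else if i == 3%N then c3 else if i == 4%N then c4 else 0.
Proof.
rewrite /P5 !coefD !coefCM coefC coefX !coefXn.
by case: i => [|[|[|[|[|i]]]]] /=; rewrite ?mulr0 ?mulr1 ?addr0 ?add0r.
Qed.

Lemma P5_inj (F : fieldType) (c0 c1 c2 c3 c4 d0 d1 d2 d3 d4 : F) :
  P5 c0 c1 c2 c3 c4 = P5 d0 d1 d2 d3 d4 ->
  [/\ c0 = d0, c1 = d1, c2 = d2, c3 = d3 & c4 = d4].
Proof.
move=> H; have K i := congr1 (fun p : {poly F} => p`_i) H.
move: (K 0%N) (K 1%N) (K 2%N) (K 3%N) (K 4%N); rewrite /= !P5_coef /=.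
by [].
Qed.

Lemma line_i_coef (F : fieldType) (f g d0 e0 d1 e1 a b : F) :
  Apoly f g + d0 *: ('X + e0%:P) + d1 *: ('X + e1%:P) = ('X + a%:P) * quadp a b ->
  f + d0 + d1 = b - a^+2 /\ g + d0 * e0 + d1 * e1 = a * b.
Proof.
have -> : Apoly f g + d0 *: ('X + e0%:P) + d1 *: ('X + e1%:P) =
  P5 (g + d0 * e0 + d1 * e1) (f + d0 + d1) 0 1 0.
  rewrite /Apoly /P5 -!mul_polyC; ring.
have -> : ('X + a%:P) * quadp a b = P5 (a * b) (b - a^+2) 0 1 0.
  rewrite /quadp /P5 -!mul_polyC; ring.
by case/P5_inj => -> -> _ _ _.
Qed.
Arguments line_i_coef {F f g d0 e0 d1 e1 a b}.


Lemma lc1 (F : fieldType) (l r : F) (E : l = r) (c x y : F) : x - y = c * (l - r) -> x = y.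
Proof. by move=> H; apply/eqP; rewrite -subr_eq0 H E subrr mulr0. Qed.
Arguments lc1 {F l r}.

Lemma core (F : fieldType) (f g v w a0 a1 b0 b1 D0 D1 D2 E1 E2 : F) :
  D1 != 0 -> D2 != 0 ->
  f + D0 + D1 = b0 - a0^+2 ->
  f + D1 + D2 = b1 - a1^+2 ->
  g + D1 * E1 + D2 * E2 = a1 * b1 ->
  - D1 * (a0 + a1) = D1 * E1 ->
  D1 * (b0 + b1 + a0 * a1) = D1^+2 + D1 * f ->
  - D1 * (a0 * b1 + b0 * a1) = 2%:R * D1^+2 * E1 + D1 * g + D1 * E1 * f + v ->
  D1 * (b0 * b1) = D1^+2 * E1^+2 + D1 * E1 * g - v * w ->
  [/\ D0 * D1 * D2 = - v * (E1 + w),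
      w^+2 - a1 * w + b1 = (E1 + w) * (E2 + w) &
      D1 * ((w^+2 - a0 * w + b0) * (w^+2 - a1 * w + b1))
        = D1^+2 * (E1 + w)^+2 + D1 * (E1 + w) * (w^+3 + f * w + g)].
Proof.
move=> nz1 nz2 I1a I1b I0b J3 J2 J1 J0.
have Ha0 : a0 = - E1 - a1.
  apply: (mulfI nz1); apply: (lc1 J3 (-1)); ring.
have Hb1 : b1 = f + D1 + D2 + a1^+2.
  by rewrite I1b subrK.
have Hg : g = a1 * b1 - D1 * E1 - D2 * E2.
  by rewrite -I0b; ring.
have J2' : b0 + b1 + a0 * a1 = D1 + f.
  by apply: (mulfI nz1); rewrite J2; ring.
have Hb0 : b0 = E1 * a1 - D2.
  apply: (lc1 J2' (1)); rewrite Hb1 Ha0; ring.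
have HD0 : D0 = b0 - a0^+2 - f - D1.
  by rewrite -I1a; ring.
have Hv : v = D1 * D2 * (a1 + E1 + E2).
  apply: (lc1 J1 (-1)); rewrite Hg Hb0 Hb1 Ha0; ring.
subst v D0 b0 g a0 b1.
split.
- apply: (lc1 J0 (1)); ring.
- apply: (mulfI (mulf_neq0 nz1 nz2)); first [apply: (lc1 J0 1); ring | apply: (lc1 J0 (-1)); ring].
- apply: (lc1 J0 (1)); ring.
Qed.
Arguments core {F f g v w a0 a1 b0 b1 D0 D1 D2 E1 E2}.


Lemma line_ii_coef (F : fieldType) (f g v w u0 u1 a b c e' d e : F) :
  - ((u0 * u1) *: (quadp a b * quadp c e'))
  = d ^+ 2 *: ('X + e%:P) ^+ 2 + d *: (('X + e%:P) * Apoly f g) - Rpoly v w ->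
  [/\ - (u0 * u1) = d, (u0 * u1) * (a + c) = d * e,
      - (u0 * u1) * (b + e' + a * c) = d ^+ 2 + d * f,
      (u0 * u1) * (a * e' + b * c) = 2%:R * d ^+ 2 * e + d * g + d * e * f + v
    & - (u0 * u1) * (b * e') = d ^+ 2 * e ^+ 2 + d * e * g - v * w].
Proof.
have -> : - ((u0 * u1) *: (quadp a b * quadp c e')) =
  P5 (- (u0 * u1) * (b * e')) ((u0 * u1) * (a * e' + b * c))
     (- (u0 * u1) * (b + e' + a * c)) ((u0 * u1) * (a + c)) (- (u0 * u1)).
  rewrite /quadp /P5 -!mul_polyC; ring.
have -> : d ^+ 2 *: ('X + e%:P) ^+ 2 + d *: (('X + e%:P) * Apoly f g) - Rpoly v w =
  P5 (d ^+ 2 * e ^+ 2 + d * e * g - v * w) (2%:R * d ^+ 2 * e + d * g + d * e * f + v)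
     (d ^+ 2 + d * f) (d * e) d.
  rewrite /Apoly /Rpoly /P5 -!mul_polyC; ring.
by case/P5_inj => -> -> -> -> ->.
Qed.
Arguments line_ii_coef {F f g v w u0 u1 a b c e' d e}.


Ltac lct H := first [ apply: (lc1 H 1); ring | apply: (lc1 H (-1)); ring ].

Lemma core2 (F : fieldType) (f g v w m a0 a1 b0 b1 D0 D1 D2 E1 E2 : F) :
  D1 != 0 -> D2 != 0 ->
  f + D0 + D1 = b0 - a0^+2 ->
  f + D1 + D2 = b1 - a1^+2 ->
  g + D1 * E1 + D2 * E2 = a1 * b1 ->
  - m = D1 ->
  m * (a0 + a1) = D1 * E1 ->
  - m * (b0 + b1 + a0 * a1) = D1 ^+ 2 + D1 * f ->
  m * (a0 * b1 + b0 * a1) = 2%:R * D1 ^+ 2 * E1 + D1 * g + D1 * E1 * f + v ->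
  - m * (b0 * b1) = D1 ^+ 2 * E1 ^+ 2 + D1 * E1 * g - v * w ->
  [/\ D0 * D1 * D2 = - v * (E1 + w),
      w^+2 - a1 * w + b1 = (E1 + w) * (E2 + w) &
      D1 * ((w^+2 - a0 * w + b0) * (w^+2 - a1 * w + b1))
        = D1^+2 * (E1 + w)^+2 + D1 * (E1 + w) * (w^+3 + f * w + g)].
Proof.
move=> nz1 nz2 I1a I1b I0b hm J3 J2 J1 J0; subst D1.
apply: core => //. all: first [lct J3 | lct J2 | lct J1 | lct J0].
Qed.
Arguments core2 {F f g v w m a0 a1 b0 b1 D0 D1 D2 E1 E2}.


Lemma final_alg (F : fieldType) (v c Dm2 Dm1 D0 D1 D2 sm1 s0 s1 q0 q1 : F) :
  D0 != 0 -> Dm1 != 0 -> D1 != 0 ->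
  Dm2 * Dm1 * D0 = - v * sm1 -> Dm1 * D0 * D1 = - v * s0 -> D0 * D1 * D2 = - v * s1 ->
  q0 = sm1 * s0 -> q1 = s0 * s1 -> D0 * (q0 * q1) = D0 ^+ 2 * s0 ^+ 2 + D0 * s0 * c ->
  Dm2 * Dm1 ^+ 2 * D0 ^+ 3 * D1 ^+ 2 * D2 = v ^+ 2 * (Dm1 * D0 ^+ 2 * D1) - v ^+ 3 * c.
Proof.
move=> nz0 nzm1 nz1 Ka Kb Kc -> -> K3.
have s0nz : s0 != 0.
  apply/eqP => s00; move: Kb; rewrite s00 mulr0 => /eqP.
  by rewrite !mulf_eq0 (negbTE nz0) (negbTE nzm1) (negbTE nz1).
have Hs : sm1 * s0 * s1 = D0 * s0 + c.
  apply: (mulfI (mulf_neq0 nz0 s0nz)); lct K3.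
transitivity ((Dm2 * Dm1 * D0) * (Dm1 * D0 * D1) * (D0 * D1 * D2)); first ring.
rewrite Ka Kb Kc.
have -> : Dm1 * D0 ^+ 2 * D1 = D0 * (- v * s0) by rewrite -Kb; ring.
transitivity (- v ^+ 3 * (sm1 * s0 * s1)); first ring.
rewrite Hs; ring.
Qed.
Arguments final_alg {F v c Dm2 Dm1 D0 D1 D2 sm1 s0 s1 q0 q1}.


Theorem mainTheorem1 (F : fieldType)
  (hchar2 : (2%N \notin [pchar F])) (hchar3 : (3%N \notin [pchar F]))
  (f g v w : F) (us vs ws ds es : int -> F)
  (hu : forall h : int, us h != 0)
  (hi : forall h : int, cf_line_i f g vs ws ds es h)
  (hii : forall h : int, cf_line_ii f g v w us vs ws ds es h)
  (T : int -> F)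
  (hT0 : forall h : int, T h != 0)
  (hT : forall h : int, T (h - 1) * T (h + 1) = ds h * T h ^+ 2) :
  forall h : int,
    T (h - 3) * T (h + 3)
    = v ^+ 2 * (T (h - 2) * T (h + 2)) - v ^+ 3 * (g + w * f + w ^+ 3) * T h ^+ 2.
Proof.
have hd : forall n, ds n != 0.
  move=> n; have := line_ii_coef (hii (n - 1)); rewrite subrK => -[<- _ _ _ _].
  by rewrite oppr_eq0 mulf_neq0.
have K : forall n,
  [/\ ds (n - 1) * ds n * ds (n + 1) = - v * (es n + w),
      w^+2 - vs n * w + ws n = (es n + w) * (es (n + 1) + w) &
      ds n * ((w^+2 - vs (n - 1) * w + ws (n - 1)) * (w^+2 - vs n * w + ws n))
        = ds n ^+2 * (es n + w)^+2 + ds n * (es n + w) * (w^+3 + f * w + g)].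
  move=> n.
  have := line_i_coef (hi (n - 1)); rewrite subrK => -[I1a _].
  have := line_i_coef (hi n) => -[I1b I0b].
  have := line_ii_coef (hii (n - 1)); rewrite subrK => -[hm J3 J2 J1 J0].
  exact: (core2 (hd n) (hd (n + 1)) I1a I1b I0b hm J3 J2 J1 J0).
move=> h.
have e1 : h - 1 - 1 = h - 2 by ring.
have e2 : h + 1 + 1 = h + 2 by ring.
have e3 : h - 2 - 1 = h - 3 by ring.
have e4 : h - 2 + 1 = h - 1 by ring.
have e5 : h + 2 + 1 = h + 3 by ring.
have e6 : h + 2 - 1 = h + 1 by ring.
have e7 : h + 1 - 1 = h by ring.
have e8 : h - 1 + 1 = h by ring.
have [Ka K2a _] := K (h - 1); rewrite e1 e8 in Ka K2a.
have [Kb K2b K3] := K h.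
have [Kc _ _] := K (h + 1); rewrite e2 e7 in Kc.
have T1 := hT (h - 2); rewrite e3 e4 in T1.
have T2 := hT (h - 1); rewrite e1 e8 in T2.
have T3 := hT h.
have T4 := hT (h + 1); rewrite e7 e2 in T4.
have T5 := hT (h + 2); rewrite e6 e5 in T5.
have Th2 : T h ^+ 2 != 0 by rewrite expf_neq0.
have H2 : T (h - 2) * T (h + 2) = ds (h - 1) * ds h ^+ 2 * ds (h + 1) * T h ^+ 2.
  apply: (mulIf Th2).
  transitivity ((T (h - 2) * T h) * (T h * T (h + 2))); first ring.
  rewrite T2 T4.
  transitivity (ds (h - 1) * ds (h + 1) * (T (h - 1) * T (h + 1)) ^+ 2); first ring.
  rewrite T3; ring.
have H3 : T (h - 3) * T (h + 3) = ds (h - 2) * ds (h - 1) ^+ 2 * ds h ^+ 3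
    * ds (h + 1) ^+ 2 * ds (h + 2) * T h ^+ 2.
  apply: (mulIf (mulf_neq0 (hd h) Th2)).
  transitivity ((T (h - 3) * T (h - 1)) * (T (h + 1) * T (h + 3))).
    rewrite -T3; ring.
  rewrite T1 T5.
  transitivity (ds (h - 2) * ds (h + 2) * (T (h - 2) * T (h + 2)) ^+ 2); first ring.
  rewrite H2; ring.
rewrite H3 H2.
rewrite (final_alg (c := g + w * f + w ^+ 3) (hd h) (hd (h - 1)) (hd (h + 1)) Ka Kb Kc K2a K2b); first ring.
rewrite K3; ring.
Qed.
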